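(* Let $\Psi\in\Delta_7$ be a spinor of unit length and let $\omega^3\in\Lambda^3(\mathbb{R}^7)$ be defined by $\omega^3(X,Y,Z):=-\big(X\cdot Y\cdot Z\cdot\Psi,\Psi\big)$. Let $p,q,r\in\mathbb{R}$. Then the equation $$\Big(X+\tfrac r4\,(X\lrcorner\omega^3)+p\,(X\lrcorner *\omega^3)+q\,(X\wedge *\omega^3)\Big)\cdot\Psi=0$$ holds for all vectors $X\in\mathbb{R}^7$ if and only if $16p=-4+12q-3r$.
   Context: $\mathbb{R}^7$ carries the Euclidean metric; $\Delta_7$ is the real $8$-dimensional spin representation with $\mathrm{Spin}(7)$-invariant inner product $(\cdot,\cdot)$ for which Clifford multiplication by vectors is skew-symmetric; Clifford multiplication satisfies $X\cdot X=-|X|^2$, and $k$-forms act by Clifford multiplication ($e_{i_1}\wedge\cdots\wedge e_{i_k}\mapsto e_{i_1}\cdots e_{i_k}$ for an orthonormal basis, distinct indices). For such $\Psi$ one has $\omega^3\cdot\Psi=-7\Psi$. $*$ is the Hodge star of the Euclidean metric for the orientation of $\mathbb{R}^7$ fixed by the chosen realization of the spin representation; with this orientation $( *\omega^3)\cdot\Psi=-7\Psi$. *)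

(* Defs.v *)
From mathcomp Require Import all_boot all_order all_algebra.
Set Implicit Arguments.
Unset Strict Implicit.
Unset Printing Implicit Defensive.
Import Order.TTheory GRing.Theory Num.Theory.
Local Open Scope ring_scope.

Section Spin7.
Variable R : realFieldType.

(* Delta_7 = R^8 (column vectors) with the standard inner product. *)
Definition spinor := 'cV[R]_8.
Definition sdot (u v : spinor) : R := (u^T *m v) 0 0.

Definition vec := 'rV[R]_7.
Definition basis (i : 'I_7) : vec := \row_j (i == j)%:R.

(* A realization of Clifford multiplication by e_1..e_7 on Delta_7:
   gam i is the matrix of Clifford multiplication by e_i. *)
Definition clifford_realization (gam : 'I_7 -> 'M[R]_8) : Prop :=
  (forall i j, gam i *m gam j + gam j *m gam i = (- 2 * (i == j)%:R)%:M) /\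
  (forall i, (gam i)^T = - gam i).

Variable gam : 'I_7 -> 'M[R]_8.

Definition vact (X : vec) : 'M[R]_8 := \sum_(i < 7) X 0 i *: gam i.

(* A k-form is represented by its components alpha(e_{i_1},...,e_{i_k}),
   as a function on index sequences (only length-k sequences are used). *)
Definition form := seq 'I_7 -> R.

Definition strictly_increasing (s : seq 'I_7) : bool :=
  sorted (fun a b : 'I_7 => (a < b)%N) s.

(* Clifford action of a k-form: e_{i1}/\.../\e_{ik} |-> e_{i1}...e_{ik}, i1<...<ik *)
Definition cl_form (k : nat) (alpha : form) : 'M[R]_8 :=
  \sum_(t : k.-tuple 'I_7 | strictly_increasing t)
     alpha t *: \prod_(i <- t) gam i.

Definition interior (X : vec) (alpha : form) : form :=
  fun s => \sum_(i < 7) X 0 i * alpha (i :: s).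

Definition wedge1 (X : vec) (beta : form) : form :=
  fun s => \sum_(j < size s)
     (-1) ^+ j * X 0 (nth ord0 s j) * beta (take j s ++ drop j.+1 s).

Definition levi (s : seq 'I_7) : R :=
  if size s == 7%N then
    \prod_(a < 7) \prod_(b < 7 | (a < b)%N)
      (let x := nth ord0 s a in let y := nth ord0 s b in
       if (x < y)%N then 1 else if x == y then 0 else -1)
  else 0.

(* Hodge star of a k-form, for the orientation o * (e_1 /\ ... /\ e_7), o = +-1 *)
Definition hodge (o : R) (k : nat) (alpha : form) : form :=
  fun J => o * \sum_(t : k.-tuple 'I_7 | strictly_increasing t)
                  alpha t * levi (tval t ++ J).

Definition omega3 (Psi : spinor) (X Y Z : vec) : R :=
  - sdot (vact X *m vact Y *m vact Z *m Psi) Psi.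

Definition omega3_form (Psi : spinor) : form :=
  fun s => omega3 Psi (basis (nth ord0 s 0)) (basis (nth ord0 s 1))
                      (basis (nth ord0 s 2)).

End Spin7.

(* Main.v *)
Require Import Defs.
From mathcomp Require Import all_boot all_order all_algebra.
From mathcomp Require Import ring lra.
Set Implicit Arguments. Unset Strict Implicit. Unset Printing Implicit Defensive.
Import Order.TTheory GRing.Theory Num.Theory.
Local Open Scope ring_scope.

Definition ltI : rel 'I_7 := fun a b => (a < b)%N.
Definition ord7 : seq 'I_7 := [:: @Ordinal 7 0 isT; @Ordinal 7 1 isT; @Ordinal 7 2 isT;
  @Ordinal 7 3 isT; @Ordinal 7 4 isT; @Ordinal 7 5 isT; @Ordinal 7 6 isT].
Fixpoint allseq k : seq (seq 'I_7) :=
  if k is k'.+1 then [seq x :: s | x <- ord7, s <- allseq k'] else [:: [::]].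
Definition Lk k := filter (@strictly_increasing) (allseq k).
Fixpoint ins (x : 'I_7) (l : seq 'I_7) :=
  if l is y :: l' then if (x < y)%N then x :: l else y :: ins x l' else [:: x].
Definition isort (s : seq 'I_7) := foldr ins [::] s.

Lemma mem_ord7 (i : 'I_7) : i \in ord7.
Proof. by case: i => [[|[|[|[|[|[|[|m]]]]]]] Hm]. Qed.

Lemma sum_ord7 (V : nmodType) (F : 'I_7 -> V) :
  \sum_(i < 7) F i = \sum_(i <- ord7) F i.
Proof.
apply: perm_big; apply: uniq_perm => //; first exact: index_enum_uniq.
by move=> i; rewrite mem_index_enum mem_ord7.
Qed.

Lemma sum_tuple (V : nmodType) k (H : seq 'I_7 -> V) :
  \sum_(t : k.-tuple 'I_7) H t = \sum_(s <- allseq k) H s.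
Proof.
elim: k H => [|k IH] H.
  rewrite (eq_bigr (fun _ => H [::])) => [|t _]; last by rewrite tuple0.
  by rewrite big_const card_tuple /= big_seq1 addr0.
rewrite (reindex (fun p : 'I_7 * k.-tuple 'I_7 => [tuple of p.1 :: p.2])); last first.
  exists (fun t : k.+1.-tuple 'I_7 => (thead t, [tuple of behead t])).
    by move=> [x t] _ /=; rewrite theadE; congr pair; apply: val_inj.
  by move=> t _; rewrite [in RHS](tuple_eta t).
rewrite -(pair_big xpredT xpredT (fun x (t : k.-tuple 'I_7) => H (x :: t))).
rewrite sum_ord7 (_ : allseq k.+1 = [seq x :: s | x <- ord7, s <- allseq k]) //.
rewrite big_allpairs_dep.
by apply: eq_bigr => x _; apply: IH.
Qed.

Lemma ins_perm x l : perm_eq (ins x l) (x :: l).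
Proof.
elim: l => //= y l IH; case: ifP => // _.
apply: (@perm_trans _ (y :: x :: l)); first by rewrite perm_cons.
by apply/permPl; exact: (perm_catCA [:: y] [:: x] l).
Qed.

Lemma ins_path (x : 'I_7) l y : path ltI y l -> (y < x)%N -> x \notin l -> path ltI y (ins x l).
Proof.
elim: l y => [|z l IH] y /=; first by rewrite /ltI => _ ->.
move=> /andP[yz pl] yx; rewrite inE negb_or => /andP[xz xl].
case: ifP => xz' /=; first by rewrite /ltI yx xz' /= pl.
rewrite yz IH //; move: xz xz'; rewrite -val_eqE /=.
by case: ltngtP.
Qed.

Lemma ins_sorted x l : sorted ltI l -> x \notin l -> sorted ltI (ins x l).
Proof.
case: l => //= z l pl; rewrite inE negb_or => /andP[xz xl].
case: ifP => xz' /=; first by rewrite /ltI xz' pl.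
apply: ins_path => //; move: xz xz'; rewrite -val_eqE /=.
by case: ltngtP.
Qed.

Lemma isort_prop s : uniq s -> sorted ltI (isort s) && perm_eq (isort s) s.
Proof.
elim: s => //= x s IH /andP[xs us]; have /andP[so pe] := IH us.
rewrite ins_sorted //; last by rewrite (perm_mem pe).
by apply: perm_trans (ins_perm _ _) _; rewrite perm_cons.
Qed.

Lemma ltI_trans : transitive ltI.
Proof. move=> y x z; exact: ltn_trans. Qed.
Lemma ltI_irr : irreflexive ltI.
Proof. by move=> x; rewrite /ltI ltnn. Qed.

Lemma isort_full s : uniq s -> size s = 7%N -> isort s = ord7.
Proof.
move=> us ss; have /andP[so pe] := isort_prop us.
apply: (irr_sorted_eq ltI_trans ltI_irr) => //.
have ui : uniq (isort s) by rewrite (perm_uniq pe).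
have := uniq_min_size ui (fun i _ => mem_ord7 i).
by rewrite (perm_size pe) ss => /(_ (leqnn _)) [].
Qed.
Section S.
Variable R : realFieldType.
Definition cmp (x y : 'I_7) : R := if (x < y)%N then 1 else if x == y then 0 else -1.
Fixpoint sgn (s : seq 'I_7) : R :=
  if s is x :: s' then (\prod_(y <- s') cmp x y) * sgn s' else 1.

Lemma levi_sgn s : levi R s = if size s == 7%N then sgn s else 0.
Proof.
rewrite /levi; case: eqP => // Hs.
case: s Hs => [|x0 [|x1 [|x2 [|x3 [|x4 [|x5 [|x6 [|x7 s]]]]]]]] // _.
rewrite !big_ord_recl big_ord0 /=.
rewrite !(big_mkcond (fun b : 'I_7 => _ < b)%N) /=.
rewrite !big_ord_recl !big_ord0 /= !big_cons !big_nil /=.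
rewrite -!/(cmp _ _).
ring.
Qed.

Lemma cmp_sq x y : cmp x y ^+ 2 = (x != y)%:R.
Proof.
rewrite /cmp -val_eqE /=; case: ltngtP => _ //=; by rewrite ?expr1n ?sqrrN ?expr1n ?expr0n.
Qed.

Lemma prod_cmp_sq x s : (\prod_(y <- s) cmp x y) ^+ 2 = (x \notin s)%:R.
Proof.
elim: s => [|y s IH]; first by rewrite big_nil expr1n.
rewrite big_cons exprMn IH cmp_sq inE negb_or.
by case: (x == y); case: (x \in s); rewrite /= ?mul1r ?mul0r.
Qed.

Lemma sgn_sq s : sgn s ^+ 2 = (uniq s)%:R.
Proof.
elim: s => [|x s IH] /=; first by rewrite expr1n.
rewrite exprMn IH prod_cmp_sq.
by case: (x \in s); case: (uniq s); rewrite /= ?mul1r ?mul0r.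
Qed.

Lemma sgn_nuniq s : ~~ uniq s -> sgn s = 0.
Proof.
move=> h; apply/eqP; rewrite -sqrf_eq0 sgn_sq.
by move/negPf: h => ->.
Qed.

Lemma levi_sq u : levi R u ^+ 2 = (uniq u && (size u == 7%N))%:R.
Proof.
rewrite levi_sgn; case: eqP => _; rewrite ?andbT ?andbF ?sgn_sq //.
by rewrite expr0n.
Qed.

Lemma index_ord7 : index_enum 'I_7 = ord7.
Proof.
apply: (inj_map val_inj); rewrite /index_enum -enumT val_enum_ord.
by [].
Qed.

Variable gam : 'I_7 -> 'M[R]_8.
Hypothesis Hcl : clifford_realization gam.
Variable o : R.
Hypothesis Ho : \prod_(i < 7) gam i = o%:M.
Variable Psi : spinor R.
Hypothesis Hpsi : sdot Psi Psi = 1.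

Definition G (s : seq 'I_7) : 'M[R]_8 := \prod_(i <- s) gam i.

Lemma half_eq (x : 'M[R]_8) (a : R) : x + x = (a *+ 2)%:M -> x = a%:M.
Proof.
move=> h; have e : x = 2^-1 *: (x + x).
  by rewrite -mulr2n -scaler_nat scalerA mulVf ?scale1r // pnatr_eq0.
rewrite e h scale_scalar_mx; congr (_%:M).
by field.
Qed.

Lemma g_sq i : gam i * gam i = -1.
Proof.
have := (proj1 Hcl) i i; rewrite eqxx mulr1 mulmxE => h.
have -> : -1 = (-1 : R)%:M :> 'M[R]_8 by rewrite rmorphN1.
apply: half_eq; rewrite h; congr (_%:M); ring.
Qed.

Lemma g_ac i j : i != j -> gam i * gam j = - (gam j * gam i).
Proof.
move=> /negPf hij; have := (proj1 Hcl) i j; rewrite hij mulr0 mulmxE => h.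
by apply/eqP; rewrite -addr_eq0 h raddf0.
Qed.

Lemma g_tr i : (gam i)^T = - gam i.
Proof. exact: (proj2 Hcl). Qed.

Lemma trM (A B : 'M[R]_8) : (A * B)^T = B^T * A^T.
Proof. by rewrite -!mulmxE trmx_mul. Qed.

Lemma tr1 : (1 : 'M[R]_8)^T = 1.
Proof. exact: trmx1. Qed.

Lemma G_cons x s : G (x :: s) = gam x * G s.
Proof. by rewrite /G big_cons. Qed.

Lemma G_cat s1 s2 : G (s1 ++ s2) = G s1 * G s2.
Proof. by rewrite /G big_cat. Qed.

Lemma G_orth s : (G s)^T * G s = 1.
Proof.
elim: s => [|x s IH]; first by rewrite /G big_nil tr1 mulr1.
rewrite G_cons trM g_tr -mulrA (mulrA (- gam x)) mulNr g_sq opprK mul1r.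
exact: IH.
Qed.

Lemma o_sq : o * o = 1.
Proof.
have h := G_orth ord7.
have e : G ord7 = o%:M by rewrite -Ho /G -index_ord7.
move: h; rewrite e tr_scalar_mx -mulmxE -scalar_mxM => /matrixP /(_ ord0 ord0).
by rewrite !mxE eqxx.
Qed.

Lemma G_move l1 x l2 : x \notin l1 ->
  G (l1 ++ x :: l2) = (-1) ^+ (size l1) *: (gam x * G (l1 ++ l2)).
Proof.
elim: l1 => [|y l1 IH] /=; first by rewrite expr0 scale1r G_cons.
rewrite inE negb_or => /andP[xy xl].
rewrite !G_cons IH // exprS -scalerA -scalerAr (mulrA (gam x)) (g_ac xy) mulrA.
by rewrite mulNr scalerN scaleNr scale1r opprK.
Qed.

Lemma G_ins x l : sorted ltI l -> x \notin l ->
  gam x * G l = (\prod_(y <- l) cmp x y) *: G (ins x l).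
Proof.
elim: l => [|y l IH] /=; first by rewrite big_nil scale1r /G big_nil big_seq1 mulr1.
move=> pl; rewrite inE negb_or => /andP[xy xl].
case: ifP => xy'.
  rewrite big1_seq ?scale1r ?G_cons // => z /andP[_ zl].
  rewrite /cmp.
  have : (x < z)%N.
    move: zl; rewrite inE => /orP[/eqP -> //|zl].
    have := order_path_min ltI_trans pl => /allP /(_ z zl).
    by rewrite /ltI; apply: ltn_trans.
  by move=> ->.
rewrite G_cons mulrA g_ac // mulNr -mulrA IH ?(path_sorted pl) //.
rewrite big_cons G_cons -scalerAr /cmp xy' (negPf xy) mulN1r.
by rewrite scaleNr.
Qed.

Lemma G_isort s : uniq s -> G s = sgn s *: G (isort s).
Proof.
elim: s => [|x s IH] /=; first by rewrite scale1r.
move=> /andP[xs us]; have /andP[so pe] := isort_prop us.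
rewrite G_cons IH // -scalerAr G_ins //; last by rewrite (perm_mem pe).
by rewrite scalerA (perm_big _ pe) mulrC.
Qed.

Lemma G_ord7 : G ord7 = o%:M.
Proof. by rewrite -Ho /G -index_ord7. Qed.

Lemma levi_G t K :
  levi R (t ++ K) *: G K = (levi R (t ++ K) ^+ 2 * o) *: (G t)^T.
Proof.
have [/andP[u s7]|nu] := boolP (uniq (t ++ K) && (size (t ++ K) == 7%N)).
  have e : G t * G K = (levi R (t ++ K) * o) *: 1.
    rewrite -G_cat G_isort // isort_full //; last exact/eqP.
    by rewrite G_ord7 levi_sgn s7 -scalemx1 scalerA.
  have : (G t)^T * (G t * G K) = (levi R (t ++ K) * o) *: (G t)^T.
    by rewrite e -scalerAr mulr1.
  rewrite mulrA G_orth mul1r => ->.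
  by rewrite scalerA mulrA expr2.
have -> : levi R (t ++ K) = 0.
  rewrite levi_sgn; case: eqP => // /eqP s7.
  by apply: sgn_nuniq; move: nu; rewrite s7 andbT.
by rewrite expr0n /= !mul0r !scale0r.
Qed.

Definition q (A : 'M[R]_8) : R := (Psi^T *m A *m Psi) 0 0.

Lemma q_tr A : q A^T = q A.
Proof.
have e : Psi^T *m A^T *m Psi = (Psi^T *m A *m Psi)^T.
  by rewrite !trmx_mul trmxK mulmxA.
by rewrite /q e mxE.
Qed.

Lemma q_skew A : A^T = - A -> q A = 0.
Proof.
move=> h; have : q A = - q A.
  rewrite -{1}q_tr h /q.
  by rewrite mulmxN mulNmx mxE.
move/eqP; rewrite -addr_eq0 -mulr2n => /eqP /eqP.
by rewrite mulrn_eq0 /= => /eqP.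
Qed.

Lemma q_scale c A : q (c *: A) = c * q A.
Proof. by rewrite /q -scalemxAr -scalemxAl mxE. Qed.

Lemma q_add A B : q (A + B) = q A + q B.
Proof. by rewrite /q mulmxDr mulmxDl mxE. Qed.

Lemma q_opp A : q (- A) = - q A.
Proof. by rewrite /q mulmxN mulNmx mxE. Qed.

Lemma q1 : q 1 = 1.
Proof. by rewrite /q mulmx1; exact: Hpsi. Qed.

Lemma q_g i : q (gam i) = 0.
Proof. apply: q_skew; exact: g_tr. Qed.

Lemma q_gg i j : i != j -> q (gam i * gam j) = 0.
Proof.
move=> ij; apply: q_skew; rewrite trM !g_tr mulrNN.
by rewrite g_ac // opprK.
Qed.

Definition wq s := - q (G s).

Lemma vact_basis i : vact gam (basis R i) = gam i.
Proof.
rewrite /vact (bigD1 i) //= big1 => [|j ji]; last by rewrite mxE eq_sym (negPf ji) scale0r.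
by rewrite mxE eqxx scale1r addr0.
Qed.

Lemma w_eq s : size s = 3%N -> omega3_form gam Psi s = wq s.
Proof.
case: s => [|x [|y [|z [|? ?]]]] // _.
rewrite /omega3_form /omega3 /= !vact_basis /wq /sdot /G !big_cons big_nil mulr1.
congr (- _); rewrite -q_tr /q !trmx_mul !mulmxE.
by rewrite !mulrA.
Qed.

Definition Pi : 'M[R]_8 := Psi *m Psi^T.

Lemma compl : \sum_(i < 7) gam i *m Pi *m (gam i)^T = 1%:M - Pi.
Proof.
pose B : 'M[R]_(8, 7) := \matrix_(r, i) (gam i *m Psi) r 0.
pose M := row_mx Psi B.
have PP : Psi^T *m Psi = 1%:M.
  apply/matrixP => i j; rewrite [i]ord1 [j]ord1 [RHS]mxE eqxx mulr1n.
  exact: Hpsi.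
have eB i j : (B^T *m B) i j = q ((gam i)^T * gam j).
  rewrite /q -mulmxE !mulmxA -(mulmxA _ _ Psi) -trmx_mul !mxE.
  apply: eq_bigr => r _; rewrite !mxE.
  by [].
have PB : Psi^T *m B = 0.
  apply/matrixP => a i; rewrite [a]ord1 !mxE -[RHS](q_g i) /q -mulmxA mxE.
  by apply: eq_bigr => r _; rewrite !mxE.
have BB : B^T *m B = 1%:M.
  apply/matrixP => i j; rewrite eB g_tr mulNr q_opp !mxE.
  case: eqP => [->|/eqP ij]; first by rewrite g_sq q_opp opprK q1.
  by rewrite q_gg // oppr0.
have MtM : M^T *m M = 1%:M.
  rewrite tr_row_mx mul_col_row PP PB BB.
  have -> : B^T *m Psi = 0 by rewrite -(trmxK Psi) -trmx_mul PB trmx0.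
  by rewrite -scalar_mx_block.
have MMt : M *m M^T = 1%:M by apply: mulmx1C.
move: MMt; rewrite tr_row_mx mul_row_col => e.
have -> : \sum_(i < 7) gam i *m Pi *m (gam i)^T = B *m B^T.
  apply/matrixP => r s; rewrite summxE mxE; apply: eq_bigr => i _.
  rewrite /Pi mulmxA -mulmxA -trmx_mul !mxE big_ord1 !mxE.
  by [].
by rewrite -e /Pi addrAC subrr add0r.
Qed.

Definition Sq (M : 'M[R]_8) (l : seq (seq 'I_7)) :=
  \sum_(s <- l) G s *m M *m (G s)^T.

Lemma S1S1 M : \sum_(i < 7) gam i *m (\sum_(j < 7) gam j *m M *m (gam j)^T) *m (gam i)^T
  = Sq M (allseq 2).
Proof.
rewrite /Sq (_ : allseq 2 = [seq x :: s | x <- ord7, s <- allseq 1]) //.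
rewrite big_allpairs_dep sum_ord7; apply: eq_bigr => x _.
rewrite mulmx_sumr mulmx_suml sum_ord7.
rewrite (_ : allseq 1 = [seq y :: s | y <- ord7, s <- [:: [::]]]) //.
rewrite big_allpairs_dep; apply: eq_bigr => y _; rewrite big_seq1.
rewrite !G_cons /G big_nil mulr1 trM -!mulmxE.
by rewrite !mulmxA.
Qed.

Lemma Sq_isort M s : uniq s ->
  G s *m M *m (G s)^T = G (isort s) *m M *m (G (isort s))^T.
Proof.
move=> us; rewrite G_isort // linearZ /= -!scalemxAl -scalemxAr scalerA.
by rewrite -expr2 sgn_sq us scale1r.
Qed.

Lemma half2 (A B : 'M[R]_8) : A *+ 2 = B *+ 2 -> A = B.
Proof.
move=> h; rewrite -[A]scale1r -[B]scale1r -(@mulVf _ 2) ?pnatr_eq0 //.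
by rewrite -!scalerA !scaler_nat h.
Qed.

Lemma Sq_all2 M : Sq M (allseq 2) = M *+ 7 + Sq M (Lk 2) *+ 2.
Proof.
rewrite /Sq (bigID uniq) [LHS]addrC; congr (_ + _).
  rewrite big_seq_cond (eq_bigr (fun _ => M)).
    rewrite big_const_seq iter_addr_0; set c := count _ _.
    by have -> : c = 7%N by rewrite /c; vm_compute.
  move=> s /andP[sin nu].
  have : size s == 2%N.
    have h : all (fun s => size s == 2%N) (allseq 2) by vm_compute.
    exact: (allP h).
  case: s sin nu => [|x [|y [|? ?]]] //= _; rewrite inE andbT negbK => /eqP <- _.
  rewrite G_cons /G big_seq1 trM g_tr mulrNN -mulmxE mulmxA -(mulmxA _ _ M).
  by rewrite !mulmxE !mulrA g_sq mulN1r !mulNr -mulrA g_sq mulrN1 opprK.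
rewrite (eq_bigr (fun s => G (isort s) *m M *m (G (isort s))^T)); last first.
  by move=> s us; rewrite Sq_isort.
rewrite -big_filter -(big_map isort xpredT (fun s => G s *m M *m (G s)^T)).
rewrite (perm_big (Lk 2 ++ Lk 2)); last by vm_compute.
by rewrite big_cat mulr2n.
Qed.

Lemma S1_1 : \sum_(i < 7) gam i *m 1%:M *m (gam i)^T = 1%:M *+ 7.
Proof.
rewrite (eq_bigr (fun _ => 1%:M)) ?sumr_const ?card_ord // => i _.
by rewrite mulmx1 g_tr mulmxN mulmxE g_sq opprK.
Qed.

Lemma Sq_Pi : Sq Pi (Lk 2) = (1%:M - Pi) *+ 3.
Proof.
have h := Sq_all2 Pi; rewrite -S1S1 compl in h.
move: h; rewrite (eq_bigr (fun i => gam i *m 1%:M *m (gam i)^T - gam i *m Pi *m (gam i)^T)); last first.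
  by move=> i _; rewrite mulmxBr mulmxBl.
rewrite sumrB S1_1 compl => h.
apply: half2; apply/matrixP => i j; move/matrixP: h => /(_ i j).
rewrite !(mulmxnE, mxE) => h.
lra.
Qed.

Lemma K1 a : \sum_(u <- Lk 2) wq (a :: u) *: (G u *m Psi) = (gam a *m Psi) *+ 3.
Proof.
have e u : wq (a :: u) *: (G u *m Psi) = G u *m Pi *m (G u)^T *m (gam a *m Psi).
  have -> : G u *m Pi *m (G u)^T *m (gam a *m Psi) =
    (G u *m Psi) *m (Psi^T *m (G u)^T *m gam a *m Psi) by rewrite /Pi !mulmxA.
  set c := Psi^T *m _ *m _ *m Psi.
  rewrite [c]mx11_scalar mul_mx_scalar; congr (_ *: _).
  rewrite /wq G_cons.
  have -> : c 0 0 = q ((G u)^T * gam a) by rewrite /c /q -mulmxE !mulmxA.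
  by rewrite -(q_tr ((G u)^T * gam a)) trM trmxK g_tr mulNr q_opp.
rewrite (eq_bigr _ (fun u _ => e u)) -mulmx_suml -/(Sq Pi (Lk 2)) Sq_Pi.
rewrite -scaler_nat -scalemxAl mulmxBl mul1mx /Pi -mulmxA.
set c := Psi^T *m _.
have hc : c 0 0 = 0 by rewrite -(q_g a) /c /q mulmxA.
rewrite [c]mx11_scalar hc.
by rewrite mul_mx_scalar scale0r subr0 scaler_nat.
Qed.

Lemma mulrn_inj m n k (A B : 'M[R]_(m, n)) : A *+ k.+1 = B *+ k.+1 -> A = B.
Proof.
move=> h; rewrite -[A]scale1r -[B]scale1r -(@mulVf _ k.+1%:R) ?pnatr_eq0 //.
by rewrite -!scalerA !scaler_nat h.
Qed.

Definition F s := wq s *: G s.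

Lemma F_isort s : uniq s -> F s = F (isort s).
Proof.
move=> us; rewrite /F /wq {1 2}G_isort // q_scale scalerA; congr (_ *: _).
by rewrite mulNr mulrAC -expr2 sgn_sq us mul1r.
Qed.

Lemma wq_nonuniq s : size s = 3%N -> ~~ uniq s -> wq s = 0.
Proof.
case: s => [|x [|y [|z [|? ?]]]] // _ nu.
rewrite /wq /G !big_cons big_nil mulr1.
have [<-|xy] := eqVneq x y; first by rewrite mulrA g_sq mulN1r q_opp q_g !oppr0.
have [<-|yz] := eqVneq y z; first by rewrite g_sq mulrN1 q_opp q_g !oppr0.
have [<-|xz] := eqVneq x z.
  rewrite (g_ac (i:=y) (j:=x)) 1?eq_sym // mulrN mulrA g_sq mulN1r opprK.
  by rewrite q_g !oppr0.
by move: nu; rewrite /= !inE (negPf xy) (negPf xz) (negPf yz).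
Qed.

Lemma Omega : \sum_(t <- Lk 3) F t *m Psi = - (Psi *+ 7).
Proof.
have h : \sum_(a <- ord7) \sum_(u <- Lk 2) F (a :: u) *m Psi = - (Psi *+ 21).
  rewrite (eq_bigr (fun _ => - (Psi *+ 3))).
    by rewrite big_const_seq iter_addr_0 (_ : count _ _ = 7%N) // mulNrn -mulrnA.
  move=> a _.
  rewrite (eq_bigr (fun u => gam a *m (wq (a :: u) *: (G u *m Psi)))); last first.
    by move=> u _; rewrite /F G_cons -mulmxE -scalemxAl -mulmxA -scalemxAr.
  rewrite -mulmx_sumr K1 raddfMn /= mulmxA mulmxE g_sq mulNmx mul1mx.
  by rewrite mulNrn.
have e : \sum_(a <- ord7) \sum_(u <- Lk 2) F (a :: u) *m Psi =
    \sum_(s <- [seq a :: u | a <- ord7, u <- Lk 2]) F s *m Psi.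
  by rewrite big_allpairs_dep.
set L := [seq a :: u | a <- ord7, u <- Lk 2].
have e2 : \sum_(s <- L | uniq s) F s *m Psi = \sum_(s <- Lk 3 ++ Lk 3 ++ Lk 3) F s *m Psi.
  rewrite (eq_bigr (fun s => F (isort s) *m Psi)); last by move=> s us; rewrite F_isort.
  rewrite -big_filter.
  have -> : \sum_(s <- [seq s <- L | uniq s]) F (isort s) *m Psi =
      \sum_(s <- map isort [seq s <- L | uniq s]) F s *m Psi by rewrite big_map.
  by apply: perm_big; rewrite /L; vm_compute.
move: h; rewrite e (bigID uniq) e2.
rewrite [X in _ + X = _]big1_seq; last first.
  move=> s /andP[nu sin]; rewrite /F wq_nonuniq ?scale0r ?mul0mx //.
  have hs : all (fun s => size s == 3%N) L by rewrite /L; vm_compute.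
  by apply/eqP; exact: (allP hs).
rewrite addr0 !big_cat /= -mulr2n -mulrS.
have -> : - (Psi *+ 21) = (- (Psi *+ 7)) *+ 3 by rewrite mulNrn -mulrnA.
exact: mulrn_inj.
Qed.

Definition KK (X : vec R) (b : 'I_7) (t : seq 'I_7) := X 0 b *: (gam b *m (F t *m Psi)).

Lemma vactPsi X : vact gam X *m Psi = \sum_(a <- ord7) X 0 a *: (gam a *m Psi).
Proof.
by rewrite /vact mulmx_suml sum_ord7; apply: eq_bigr => a _; rewrite -scalemxAl.
Qed.

Lemma Lk2_uniq u : u \in Lk 2 -> uniq u && (size u == 2%N).
Proof.
have h : all (fun u => uniq u && (size u == 2%N)) (Lk 2) by vm_compute.
exact: (allP h).
Qed.

Lemma R3 X : \sum_(t <- Lk 3) \sum_(j <- iota 0 3) KK X (nth ord0 t j) t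
  = (- (vact gam X *m Psi)) *+ 3.
Proof.
have -> : \sum_(t <- Lk 3) \sum_(j <- iota 0 3) KK X (nth ord0 t j) t =
   \sum_(p <- [seq (nth ord0 t j, t) | t <- Lk 3, j <- iota 0 3]) KK X p.1 p.2.
  by rewrite big_allpairs_dep.
rewrite (perm_big [seq (a, isort (a :: u)) | a <- ord7, u <- [seq u <- Lk 2 | a \notin u]]);
  last by vm_compute.
rewrite big_allpairs_dep vactPsi -sumrN -sumrMnl.
apply: eq_bigr => a _.
rewrite big_filter big_mkcond big_seq.
rewrite (eq_bigr (fun u => - (X 0 a *: (wq (a :: u) *: (G u *m Psi))))); last first.
  move=> u uin; have /andP[uu /eqP us] := Lk2_uniq uin.
  case: ifP => au.
    rewrite /KK -F_isort /=; last by rewrite au uu.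
    rewrite /F G_cons -mulmxE -scalemxAl -mulmxA -scalemxAr !mulmxA mulmxE g_sq.
    by rewrite mulN1r mulNmx !scalerN.
  rewrite wq_nonuniq ?scale0r ?scaler0 ?oppr0 //=; first by rewrite us.
  by rewrite au.
rewrite -big_seq sumrN -scaler_sumr K1.
by rewrite mulNrn scalerMnr.
Qed.

Lemma clE k (al : seq 'I_7 -> R) : cl_form gam k al = \sum_(s <- Lk k) al s *: G s.
Proof.
rewrite /cl_form big_mkcond /=.
rewrite (sum_tuple k (fun s => if strictly_increasing s then al s *: G s else 0)).
by rewrite -big_mkcond /Lk big_filter.
Qed.

Lemma hodgeE (al : seq 'I_7 -> R) J :
  hodge o 3 al J = o * \sum_(t <- Lk 3) al t * levi R (t ++ J).
Proof.
rewrite /hodge big_mkcond /=.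
rewrite (sum_tuple 3 (fun s => if strictly_increasing s then al s * levi R (s ++ J) else 0)).
by rewrite -big_mkcond /Lk big_filter.
Qed.

Lemma Lk3_prop t : t \in Lk 3 -> uniq t && (size t == 3%N).
Proof.
have h : all (fun u => uniq u && (size u == 3%N)) (Lk 3) by vm_compute.
exact: (allP h).
Qed.

Lemma Lk5_prop t : t \in Lk 5 -> uniq t && (size t == 5%N).
Proof.
have h : all (fun u => uniq u && (size u == 5%N)) (Lk 5) by vm_compute.
exact: (allP h).
Qed.

Lemma Gt_sym t : t \in Lk 3 -> (G t)^T = G t.
Proof.
move=> /Lk3_prop /andP[]; case: t => [|x [|y [|z [|? ?]]]] // u _.
move: u; rewrite /= !inE !negb_or !andbT => /andP[/andP[xy xz] yz].
rewrite /G !big_cons big_nil mulr1 !trM !g_tr.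
rewrite mulrNN mulrN -mulrA (g_ac (i:=y) (j:=x)) 1?eq_sym // mulrN opprK.
rewrite [LHS]mulrA (g_ac (i:=z) (j:=x)) 1?eq_sym // mulNr -mulrA (g_ac (i:=z) (j:=y)) 1?eq_sym //.
by rewrite mulrN opprK mulrA.
Qed.

Lemma LT (X : vec R) t K x (sg : R) : t \in Lk 3 ->
  (((X 0 x * sg) * (o * (omega3_form gam Psi t * levi R (t ++ K)))) *: (gam x * G K)) *m Psi
  = (sg * levi R (t ++ K) ^+ 2) *: KK X x t.
Proof.
move=> tin; have /andP[_ /eqP t3] := Lk3_prop tin.
rewrite w_eq //.
set lv := levi R (t ++ K).
have e1 : lv *: (gam x * G K) = (lv ^+ 2 * o) *: (gam x * G t).
  by rewrite scalerAr levi_G -scalerAr Gt_sym.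
rewrite (_ : (X 0 x * sg * (o * (wq t * lv))) = (X 0 x * sg * o * wq t) * lv); last by ring.
rewrite -scalerA e1 /KK /F -!scalemxAl -!scalemxAr !scalerA -mulmxE mulmxA.
congr (_ *: _).
transitivity ((X 0 x * sg * wq t * lv ^+ 2) * (o * o)); first by ring.
by rewrite o_sq; ring.
Qed.

Definition AT := [seq (a, t) | a <- ord7, t <- Lk 3].
Definition cq2 (qq : seq 'I_7 * ('I_7 * seq 'I_7)) :=
  uniq (qq.2.2 ++ qq.2.1 :: qq.1) && (size (qq.2.2 ++ qq.2.1 :: qq.1) == 7%N).
Definition LJ := [seq (J, pp) | J <- Lk 3, pp <- AT].
Definition list1 := [seq (nth ord0 t j, t) | t <- Lk 3, j <- iota 0 3].

Lemma sumAT X : \sum_(pp <- AT) KK X pp.1 pp.2 = - ((vact gam X *m Psi) *+ 7).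
Proof.
rewrite /AT big_allpairs_dep vactPsi -sumrMnl -sumrN; apply: eq_bigr => a _.
rewrite /KK /= -scaler_sumr -mulmx_sumr Omega raddfN raddfMn /=.
by rewrite scalerN scalerMnr.
Qed.

Lemma sumlist1 X : \sum_(pp <- list1) KK X pp.1 pp.2 = (- (vact gam X *m Psi)) *+ 3.
Proof. by rewrite /list1 big_allpairs_dep R3. Qed.

Lemma K2 X : cl_form gam 3 (interior X (hodge o 3 (omega3_form gam Psi))) *m Psi
   = (vact gam X *m Psi) *+ 4.
Proof.
have step : cl_form gam 3 (interior X (hodge o 3 (omega3_form gam Psi))) *m Psi =
   - \sum_(qq <- LJ) (if cq2 qq then KK X qq.2.1 qq.2.2 else 0).
  rewrite clE mulmx_suml /LJ big_allpairs_dep -sumrN.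
  apply: eq_big_seq => J Jin.
  rewrite /AT big_allpairs_dep /interior sum_ord7 scaler_suml mulmx_suml -sumrN.
  apply: eq_bigr => a _.
  rewrite hodgeE mulr_sumr mulr_sumr scaler_suml mulmx_suml -sumrN.
  apply: eq_big_seq => t tin.
  have eG : G J = - (gam a * G (a :: J)) by rewrite G_cons mulrA g_sq mulN1r opprK.
  rewrite eG scalerN mulNmx -[X 0 a]mulr1 LT // mul1r levi_sq /cq2 /=.
  by case: (_ && _); rewrite ?scale1r ?scale0r.
rewrite step -big_mkcond -big_filter.
have -> : \sum_(qq <- [seq qq <- LJ | cq2 qq]) KK X qq.2.1 qq.2.2 =
    \sum_(pp <- map snd [seq qq <- LJ | cq2 qq]) KK X pp.1 pp.2 by rewrite big_map.
have hs : \sum_(pp <- map snd [seq qq <- LJ | cq2 qq] ++ list1) KK X pp.1 pp.2 =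
    \sum_(pp <- AT) KK X pp.1 pp.2 by apply: perm_big; vm_compute.
move: hs; rewrite big_cat sumAT sumlist1 => hs.
set A := \sum_(pp <- _) _ in hs *.
have -> : A = - ((vact gam X *m Psi) *+ 7) - (- (vact gam X *m Psi)) *+ 3.
  by rewrite -hs addrK.
have -> : (vact gam X *m Psi) *+ 7 = (vact gam X *m Psi) *+ 4 + (vact gam X *m Psi) *+ 3.
  by rewrite -mulrnDr.
by rewrite mulNrn opprK opprD opprK addrK.
Qed.

Definition SJT := [seq (sj, t) | sj <- [seq (s, j) | s <- Lk 5, j <- iota 0 5], t <- Lk 3].
Definition cq3 (qq : (seq 'I_7 * nat) * seq 'I_7) :=
  uniq (qq.2 ++ (take qq.1.2 qq.1.1 ++ drop qq.1.2.+1 qq.1.1)) &&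
  (size (qq.2 ++ (take qq.1.2 qq.1.1 ++ drop qq.1.2.+1 qq.1.1)) == 7%N).
Definition f3 (qq : (seq 'I_7 * nat) * seq 'I_7) := (nth ord0 qq.1.1 qq.1.2, qq.2).

Lemma sum_ord_iota n (H : nat -> R) : \sum_(j < n) H j = \sum_(j <- iota 0 n) H j.
Proof. by rewrite -(big_mkord xpredT) /index_iota subn0. Qed.

Lemma K3 X : cl_form gam 5 (wedge1 X (hodge o 3 (omega3_form gam Psi))) *m Psi
   = (- (vact gam X *m Psi)) *+ 3.
Proof.
have step : cl_form gam 5 (wedge1 X (hodge o 3 (omega3_form gam Psi))) *m Psi =
   \sum_(qq <- SJT) (if cq3 qq then KK X (f3 qq).1 (f3 qq).2 else 0).
  rewrite clE mulmx_suml /SJT big_allpairs_dep big_allpairs_dep.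
  apply: eq_big_seq => s sin; have /andP[us /eqP s5] := Lk5_prop sin.
  rewrite /wedge1 (sum_ord_iota (size s) (fun j => (-1) ^+ j * X 0 (nth ord0 s j) *
     hodge o 3 (omega3_form gam Psi) (take j s ++ drop j.+1 s))) s5 scaler_suml mulmx_suml.
  apply: eq_big_seq => j; rewrite mem_iota => /andP[_ j5].
  set x := nth ord0 s j; set K := take j s ++ drop j.+1 s.
  have es : s = take j s ++ x :: drop j.+1 s by rewrite -drop_nth ?s5 // cat_take_drop.
  have eG : G s = (-1) ^+ j *: (gam x * G K).
    have xt : x \notin take j s.
      move: us; rewrite {1}es cat_uniq => /and3P[_ /hasPn h _].
      by apply: h; rewrite inE eqxx.
    by rewrite {1}es G_move // size_takel // s5 ltnW.
  rewrite hodgeE mulr_sumr mulr_sumr scaler_suml mulmx_suml.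
  apply: eq_big_seq => t tin.
  rewrite eG scalerA.
  rewrite (_ : (-1) ^+ j * X 0 x * (o * (omega3_form gam Psi t * levi R (t ++ K))) * (-1) ^+ j
     = (X 0 x * ((-1) ^+ j * (-1) ^+ j)) * (o * (omega3_form gam Psi t * levi R (t ++ K))));
     last by ring.
  rewrite LT // -exprMn mulrNN mulr1 expr1n mul1r levi_sq /cq3 /f3 /=.
  by case: (_ && _); rewrite ?scale1r ?scale0r.
rewrite step -big_mkcond -big_filter.
have -> : \sum_(qq <- [seq qq <- SJT | cq3 qq]) KK X (f3 qq).1 (f3 qq).2 =
    \sum_(pp <- map f3 [seq qq <- SJT | cq3 qq]) KK X pp.1 pp.2 by rewrite big_map.
rewrite (perm_big list1); last by vm_compute.
exact: sumlist1.
Qed.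

Lemma K1' X : cl_form gam 2 (interior X (omega3_form gam Psi)) *m Psi
   = (vact gam X *m Psi) *+ 3.
Proof.
rewrite clE mulmx_suml.
rewrite (eq_big_seq (fun u => \sum_(a <- ord7) X 0 a *: (wq (a :: u) *: (G u *m Psi)))); last first.
  move=> u uin; have /andP[_ /eqP u2] := Lk2_uniq uin.
  rewrite /interior sum_ord7 scaler_suml mulmx_suml; apply: eq_bigr => a _.
  by rewrite w_eq /= ?u2 // -scalemxAl scalerA.
rewrite exchange_big vactPsi -sumrMnl; apply: eq_bigr => a _.
by rewrite -scaler_sumr K1 scalerMnr.
Qed.

Lemma main_core p0 q0 r0 :
  (forall X : vec R,
     (vact gam X
      + (r0 / 4) *: cl_form gam 2 (interior X (omega3_form gam Psi))
      + p0 *: cl_form gam 3 (interior X (hodge o 3 (omega3_form gam Psi)))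
      + q0 *: cl_form gam 5 (wedge1 X (hodge o 3 (omega3_form gam Psi))))
     *m Psi = 0)
  <-> 16 * p0 = -4 + 12 * q0 - 3 * r0.
Proof.
have E X : (vact gam X
      + (r0 / 4) *: cl_form gam 2 (interior X (omega3_form gam Psi))
      + p0 *: cl_form gam 3 (interior X (hodge o 3 (omega3_form gam Psi)))
      + q0 *: cl_form gam 5 (wedge1 X (hodge o 3 (omega3_form gam Psi))))
     *m Psi = (1 + r0 / 4 * 3 + p0 * 4 - q0 * 3) *: (vact gam X *m Psi).
  rewrite !mulmxDl -!scalemxAl K1' K2 K3 mulNrn -!scaler_nat !scalerA scalerN.
  by rewrite scalerA !scalerDl scale1r scaleNr.
split.
  move=> /(_ (basis R ord0)); rewrite E => /eqP; rewrite scaler_eq0 => /orP[/eqP h|/eqP hv].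
    lra.
  exfalso; move: hv; rewrite vact_basis => hv.
  have h1 : q 1 = 0.
    have e : (1 : 'M[R]_8) = (gam ord0)^T * gam ord0 by rewrite g_tr mulNr g_sq opprK.
    by rewrite e /q -mulmxE mulmxA -(mulmxA _ _ Psi) hv mulmx0 mxE.
  by move: h1; rewrite q1 => /eqP; rewrite oner_eq0.
move=> h X; rewrite E.
have -> : 1 + r0 / 4 * 3 + p0 * 4 - q0 * 3 = 0 by lra.
by rewrite scale0r.
Qed.
End S.

Theorem mainTheorem3 (R : realFieldType) (gam : 'I_7 -> 'M[R]_8) (o : R)
  (Psi : spinor R) (p q r : R) :
  clifford_realization gam ->
  \prod_(i < 7) gam i = o%:M ->
  sdot Psi Psi = 1 ->
  (forall X : vec R,
     (vact gam X
      + (r / 4) *: cl_form gam 2 (interior X (omega3_form gam Psi))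
      + p *: cl_form gam 3 (interior X (hodge o 3 (omega3_form gam Psi)))
      + q *: cl_form gam 5 (wedge1 X (hodge o 3 (omega3_form gam Psi))))
     *m Psi = 0)
  <-> 16 * p = -4 + 12 * q - 3 * r.
Proof.
by move=> Hcl Ho Hpsi; apply: main_core.
Qed.
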